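(* Assume AS.1, AS.3, AS.4 and AS.5, and consider a realization of the SKOFFAR$p$ algorithm in which $\mathcal K_1$ occurs. Then $$f(x_{k_1})\le f_{\max}\stackrel{\rm def}{=} f(x_0)+\frac{1}{(p+1)!}\left(\frac{L_p}{\sigma_0}\nu_{\max}+\vartheta\sigma_0\right),$$ where $\sigma_0=\nu_0$ and $$\nu_{\max}=\frac{2L_p}{\vartheta}\left[1+\left(2\eta+2\left(\frac{(p+1)!\,\kappa_g}{\vartheta\nu_0}\right)^{1/p}\right)^{p+1}\right],\qquad \eta=\sum_{i=2}^{p}\left[\frac{\kappa_{\rm high}(p+1)!}{i!\,\vartheta\nu_0}\right]^{\frac{1}{p-i+1}}$$ (with $\eta=0$ when $p=1$).
   Context: Let $f:\mathbb{R}^n\to\mathbb{R}$ and $p\ge1$ an integer; $\|\cdot\|$ is the Euclidean norm for vectors, the spectral norm for matrices and the induced (subordinate) norm for tensors; $T[d]^i$ denotes a symmetric $i$-tensor applied to $i$ copies of $d$. Assumptions: AS.1: $f$ is $p$ times continuously differentiable on $\mathbb{R}^n$. AS.3: there is $L_p\ge 0$ with $\|\nabla^p f(x)-\nabla^p f(y)\|\le L_p\|x-y\|$ for all $x,y$. AS.4: there is $\kappa_g\ge0$ with $\|\nabla f(x)\|\le\kappa_g$ for all $x$. AS.5: if $p>1$ there is $\kappa_{\rm high}\ge0$ with $\min_{\|d\|\le1}\nabla^i f(x)[d]^i\ge-\kappa_{\rm high}$ for all $x$ and $i\in\{2,\dots,p\}$ (set $\kappa_{\rm high}=0$ if $p=1$).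 For $x,s\in\mathbb{R}^n$ let $T_{f,p}(x,s)=f(x)+\sum_{i=1}^p\frac{1}{i!}\nabla^i f(x)[s]^i$. Write $g_k=\nabla f(x_k)$. The SKOFFAR$p$ algorithm: given $x_0\in\mathbb{R}^n$, $\nu_0>0$, $\epsilon\in(0,1]$, $\theta>1$, $\mu_{-1}\ge 0$, $\vartheta\in(0,1)$ and a fixed distribution $\mathcal S$ of $\ell\times n$ random matrices ($\ell<n$), for $k=0,1,2,\dots$: (i) if $k=0$ set $\sigma_0=\nu_0$; otherwise choose $\sigma_k\in[\vartheta\nu_k,\max(\nu_k,\mu_k)]$, where $\mu_k=\max\Big[\mu_{k-1},\frac{\|S_{k-1}g_k\|-\|\nabla_{\hat s}\widehat T_{k-1}(\hat s_{k-1})\|}{\kappa_{S,k-1}\|s_{k-1}\|^p}\Big]$ for some number $\kappa_{S,k-1}\ge\|S_{k-1}\|$; (ii) draw $S_k\in\mathbb{R}^{\ell\times n}$ from $\mathcal S$, define for $\hat s\in\mathbb{R}^\ell$ the sketched Taylor model $\widehat T_k(\hat s)=T_{f,p}(x_k,S_k^T\hat s)$ and the sketched model $\widehat m_k(\hat s)=\widehat T_k(\hat s)+\frac{\sigma_k}{(p+1)!}\|S_k^T\hat s\|^{p+1}$, and compute $\hat s_k\in\mathbb{R}^\ell$ with $\widehat m_k(\hat s_k)<\widehat m_k(0)$ and $\|\nabla_{\hat s}\widehat T_k(\hat s_k)\|\le\theta\frac{\sigma_k}{p!}\|S_k^T\hat s_k\|^{p-1}\|S_kS_k^T\hat s_k\|$;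 set $s_k=S_k^T\hat s_k$; (iii) set $x_{k+1}=x_k+s_k$ and $\nu_{k+1}=\nu_k+\nu_k\|s_k\|^{p+1}$. Define $k_1=\inf\{k\ge1:\nu_k\ge 2L_p/\vartheta\}$ and let $\mathcal K_1$ be the event that $k_1<\infty$. *)

(* Defs.v *)
From HB Require Import structures.
From mathcomp Require Import all_boot all_order all_algebra.
From mathcomp Require Import all_classical all_reals all_analysis.
Set Implicit Arguments. Unset Strict Implicit. Unset Printing Implicit Defensive.
Import Order.TTheory GRing.Theory Num.Theory.
Import numFieldNormedType.Exports.
Local Open Scope ring_scope.

Section Defs.
Variable R : realType.

Definition enorm (m : nat) (v : 'cV[R]_m) : R := Num.sqrt (\sum_(i < m) v i 0 ^+ 2).

(* Dn f i x [:: v1; ...; vi] = nabla^i f(x)[v1,...,vi], defined as iterated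
   directional derivatives (MathComp-Analysis 'D_v). *)
Fixpoint Dn (m : nat) (f : 'cV[R]_m -> R) (i : nat) (x : 'cV[R]_m) (vs : seq 'cV[R]_m) : R :=
  match i, vs with
  | 0, _ => f x
  | i'.+1, v :: vs' => 'D_v (fun y => Dn f i' y vs') x
  | _.+1, [::] => 0
  end.

Definition grad (m : nat) (h : 'cV[R]_m -> R) (x : 'cV[R]_m) : 'cV[R]_m :=
  \col_(j < m) 'D_(delta_mx j 0 : 'cV[R]_m) h x.

Definition Tfp (m : nat) (f : 'cV[R]_m -> R) (p : nat) (x s : 'cV[R]_m) : R :=
  f x + \sum_(1 <= i < p.+1) (i`!%:R)^-1 * Dn f i x (nseq i s).

(* AS.1: f is p times continuously differentiable (all iterated derivatives of
   order < p are Frechet differentiable, the p-th one is continuous). *)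
Definition AS1 (m : nat) (f : 'cV[R]_m -> R) (p : nat) : Prop :=
  (forall i vs, (i < p)%N -> size vs = i ->
     forall x, differentiable (fun y => Dn f i y vs) x) /\
  (forall vs, size vs = p -> continuous (fun y => Dn f p y vs)).

(* AS.3: ||nabla^p f(x) - nabla^p f(y)|| <= Lp ||x - y|| with the induced tensor norm. *)
Definition AS3 (m : nat) (f : 'cV[R]_m -> R) (p : nat) (Lp : R) : Prop :=
  0 <= Lp /\
  forall x y vs, size vs = p -> all (fun v => enorm v <= 1) vs ->
    `|Dn f p x vs - Dn f p y vs| <= Lp * enorm (x - y).

Definition AS4 (m : nat) (f : 'cV[R]_m -> R) (kg : R) : Prop :=
  0 <= kg /\ forall x, enorm (grad f x) <= kg.

Definition AS5 (m : nat) (f : 'cV[R]_m -> R) (p : nat) (khigh : R) : Prop :=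
  0 <= khigh /\
  forall x i d, (2 <= i <= p)%N -> enorm d <= 1 -> - khigh <= Dn f i x (nseq i d).

Definition That (n l : nat) (f : 'cV[R]_n -> R) (p : nat) (x : 'cV[R]_n)
  (S : 'M[R]_(l, n)) (sh : 'cV[R]_l) : R := Tfp f p x (S^T *m sh).

Definition mhat (n l : nat) (f : 'cV[R]_n -> R) (p : nat) (x : 'cV[R]_n)
  (S : 'M[R]_(l, n)) (sigma : R) (sh : 'cV[R]_l) : R :=
  That f p x S sh + sigma / (p.+1)`!%:R * enorm (S^T *m sh) ^+ p.+1.

(* mu k = mu_k for k >= 1 ; mu 0 = mu_{-1} (stands for mu_0) *)
Fixpoint mu_seq (n l : nat) (f : 'cV[R]_n -> R) (p : nat) (mum1 : R)
  (x : nat -> 'cV[R]_n) (S : nat -> 'M[R]_(l, n)) (sh : nat -> 'cV[R]_l)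
  (kS : nat -> R) (k : nat) : R :=
  match k with
  | 0 => mum1
  | k'.+1 => Num.max (mu_seq f p mum1 x S sh kS k')
      ((enorm (S k' *m grad f (x k'.+1)) - enorm (grad (That f p (x k') (S k')) (sh k')))
        / (kS k' * enorm ((S k')^T *m sh k') ^+ p))
  end.

Definition skoffar_realization (n l : nat) (f : 'cV[R]_n -> R) (p : nat)
  (nu0 theta mum1 vth : R)
  (x : nat -> 'cV[R]_n) (S : nat -> 'M[R]_(l, n)) (sh : nat -> 'cV[R]_l)
  (sigma nu kS : nat -> R) : Prop :=
  nu 0 = nu0 /\
  sigma 0 = nu0 /\
  (forall k, (1 <= k)%N ->
     vth * nu k <= sigma k <= Num.max (nu k) (mu_seq f p mum1 x S sh kS k)) /\
  (forall k v, enorm (S k *m v) <= kS k * enorm v) /\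
  (forall k, mhat f p (x k) (S k) (sigma k) (sh k) < mhat f p (x k) (S k) (sigma k) 0) /\
  (forall k, enorm (grad (That f p (x k) (S k)) (sh k)) <=
     theta * (sigma k / p`!%:R) * enorm ((S k)^T *m sh k) ^+ p.-1
       * enorm (S k *m (S k)^T *m sh k)) /\
  (forall k, x k.+1 = x k + (S k)^T *m sh k) /\
  (forall k, nu k.+1 = nu k + nu k * enorm ((S k)^T *m sh k) ^+ p.+1).

Definition eta_const (p : nat) (khigh vth nu0 : R) : R :=
  \sum_(2 <= i < p.+1)
     (khigh * (p.+1)`!%:R / (i`!%:R * vth * nu0)) `^ ((p - i + 1)%:R^-1).

Definition nu_max (p : nat) (Lp kg khigh vth nu0 : R) : R :=
  2 * Lp / vth * (1 + (2 * eta_const p khigh vth nu0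
     + 2 * ((p.+1)`!%:R * kg / (vth * nu0)) `^ (p%:R^-1)) ^+ p.+1).

Definition f_max (n : nat) (f : 'cV[R]_n -> R) (x0 : 'cV[R]_n) (p : nat)
  (Lp kg khigh vth nu0 : R) : R :=
  let sigma0 := nu0 in
  f x0 + ((p.+1)`!%:R)^-1 * (Lp / sigma0 * nu_max p Lp kg khigh vth nu0 + vth * sigma0).

End Defs.

(* Main.v *)
Require Import Defs.
From HB Require Import structures.
From mathcomp Require Import all_boot all_order all_algebra.
From mathcomp Require Import all_classical all_reals all_analysis.
From mathcomp Require Import zify ring lra.
Import Order.TTheory GRing.Theory Num.Theory.
Import numFieldNormedType.Exports.
Local Open Scope ring_scope.

Section S.
Variable R : realType.
Variable n : nat.

Lemma line_fun (G : 'cV[R]_n -> R) (x s : 'cV[R]_n) (t : R) :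
  (fun h : R => h^-1 *: (((fun u : R => G (x + u *: s)) \o shift t) (h *: 1) - G (x + t *: s)))
  = (fun h : R => h^-1 *: ((G \o shift (x + t *: s)) (h *: s) - G (x + t *: s))).
Proof.
apply/funext => h /=; congr (_ *: (G _ - _)).
by rewrite /= [h%:A]mulr1 scalerDl addrCA.
Qed.

Lemma derive_line (G : 'cV[R]_n -> R) (x s : 'cV[R]_n) (t : R) :
  'D_1 (fun u : R => G (x + u *: s)) t = 'D_s G (x + t *: s).
Proof. by rewrite /derive line_fun. Qed.

Lemma derivable_line (G : 'cV[R]_n -> R) (x s : 'cV[R]_n) (t : R) :
  derivable G (x + t *: s) s -> derivable (fun u : R => G (x + u *: s)) t 1.
Proof. by rewrite /derivable line_fun. Qed.
End S.


Section Taylor.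
Variable R : realType.
Variable n : nat.
Variable f : 'cV[R]_n -> R.
Variable p : nat.
Hypothesis H1 : AS1 f p.
Variables x s : 'cV[R]_n.

Definition hh i (t : R) := Dn f i (x + t *: s) (nseq i s).

Lemma hh_der i : (i < p)%N -> forall t,
  derivable (hh i) t 1 /\ derive1 (hh i) t = hh i.+1 t.
Proof.
move=> ip t; case: H1 => Hd _.
have dG : differentiable (fun y => Dn f i y (nseq i s)) (x + t *: s).
  by apply: Hd => //; rewrite size_nseq.
split.
  by apply: (@derivable_line R n (fun y => Dn f i y (nseq i s))); exact: diff_derivable.
by rewrite derive1E; exact: (@derive_line R n (fun y => Dn f i y (nseq i s)) x s t).
Qed.

Lemma hh_cont i : (i <= p)%N -> continuous (hh i).
Proof.
rewrite leq_eqVlt => /predU1P[->|ip].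
  case: H1 => _ Hc t.
  change ({for t, continuous ((fun y => Dn f p y (nseq p s)) \o (fun u : R => x + u *: s))}).
  apply: continuous_comp; last by apply: Hc; rewrite size_nseq.
  apply: cvgD; first exact: cvg_cst.
  exact: scalel_continuous.
move=> t; apply/differentiable_continuous; apply/derivable1_diffP.
by case: (@hh_der i ip t).
Qed.
End Taylor.


Section Hom.
Variable R : realType.
Variable n : nat.
Variable f : 'cV[R]_n -> R.
Variable p : nat.
Hypothesis H1 : AS1 f p.

Lemma Dn_hom i (c : R) u : (i <= p)%N -> forall y,
  Dn f i y (nseq i (c *: u)) = c ^+ i * Dn f i y (nseq i u).
Proof.
elim: i => [|i IH] ip y; first by rewrite expr0 mul1r.
have ip' : (i < p)%N by [].
have IH' := IH (ltnW ip').
rewrite /=.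
have -> : (fun y0 => Dn f i y0 (nseq i (c *: u))) = (c ^+ i) *: (fun y0 => Dn f i y0 (nseq i u)).
  by apply/funext => z; rewrite IH'.
case: H1 => Hd _.
have dG : differentiable (fun y0 => Dn f i y0 (nseq i u)) y.
  by apply: Hd => //; rewrite size_nseq.
rewrite deriveE; last exact: differentiableZ.
rewrite diffZ // deriveE //= linearZ /= exprS.
by rewrite /GRing.scale /= mulrCA mulrA.
Qed.
End Hom.


Section Enorm.
Variable R : realType.
Variable n : nat.

Lemma enorm_ge0 (v : 'cV[R]_n) : 0 <= enorm v.
Proof. exact: sqrtr_ge0. Qed.

Lemma enormZ (c : R) (v : 'cV[R]_n) : enorm (c *: v) = `|c| * enorm v.
Proof.
rewrite /enorm -sqrtr_sqr -sqrtrM ?sqr_ge0 //; congr Num.sqrt.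
rewrite mulr_sumr; apply: eq_bigr => i _.
by rewrite mxE exprMn.
Qed.

Lemma enorm0 : enorm (0 : 'cV[R]_n) = 0.
Proof. by rewrite -(scale0r 0) enormZ normr0 mul0r. Qed.

Lemma enorm_eq0 (v : 'cV[R]_n) : enorm v = 0 -> v = 0.
Proof.
move=> /eqP; rewrite sqrtr_eq0 => H.
have H0 : \sum_(i < n) v i 0 ^+ 2 = 0.
  by apply/eqP; rewrite eq_le H sumr_ge0 // => i _; exact: sqr_ge0.
apply/matrixP => i j; rewrite ord1 mxE.
have := @psumr_eq0P _ _ xpredT (fun i => v i 0 ^+ 2) (fun i _ => sqr_ge0 (v i 0)) H0 i isT.
by move/eqP; rewrite sqrf_eq0 => /eqP.
Qed.
End Enorm.

Lemma Dn_lip (R : realType) n (f : 'cV[R]_n -> R) p Lp (y z s : 'cV[R]_n) :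
  (1 <= p)%N -> AS1 f p -> AS3 f p Lp ->
  Dn f p y (nseq p s) - Dn f p z (nseq p s) <= Lp * enorm (y - z) * enorm s ^+ p.
Proof.
move=> p1 H1 [Lp0 H3].
have [->|s0] := eqVneq s 0.
  rewrite -(scale0r (0 : 'cV[R]_n)) !(@Dn_hom R n f p H1) // expr0n /=.
  have p0 : (p == 0%N) = false by apply/negbTE; rewrite -lt0n.
  by rewrite p0 !mul0r subrr enormZ normr0 mul0r expr0n p0 mulr0.
have r0 : 0 < enorm s.
  by rewrite lt_neqAle enorm_ge0 andbT eq_sym; apply/eqP => /enorm_eq0; apply/eqP.
set u := (enorm s)^-1 *: s.
have su : s = enorm s *: u by rewrite /u scalerA divff ?gt_eqF // scale1r.
have nu : enorm u = 1.
  by rewrite /u enormZ ger0_norm ?invr_ge0 ?enorm_ge0 // mulVf // gt_eqF.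
clearbody u.
have -> : nseq p s = nseq p (enorm s *: u) by rewrite -su.
rewrite !(@Dn_hom R n f p H1) // -mulrBr mulrC ler_wpM2r //; first by rewrite exprn_ge0 // enorm_ge0.
apply: le_trans (ler_norm _) _; apply: H3; first by rewrite size_nseq.
by rewrite all_nseq nu lexx orbT.
Qed.


Section Taylor2.
Variable R : realType.
Variable n : nat.
Variable f : 'cV[R]_n -> R.
Variable p : nat.
Variable Lp : R.
Hypothesis p1 : (1 <= p)%N.
Hypothesis H1 : AS1 f p.
Hypothesis H3 : AS3 f p Lp.
Variables x s : 'cV[R]_n.

Let h := @hh R n f x s.
Let M := Lp * enorm s ^+ p.+1.
Definition cc m k := (if k == m.+1 then M else h (p - m + k)%N 0) / (k`!)%:R.
Definition Q m : {poly R} := \poly_(k < m.+2) cc m k.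

Lemma derivQ m : (m < p)%N -> (Q m.+1)^`() = Q m.
Proof.
move=> mp; apply/polyP => k.
rewrite coef_deriv !coef_poly ltnS; case: ifP => km; last by rewrite mul0rn.
rewrite /cc eqSS factS natrM.
have k0 : (k.+1)%:R != 0 :> R by rewrite pnatr_eq0.
have kf : (k`!)%:R != 0 :> R by rewrite pnatr_eq0 -lt0n fact_gt0.
case: eqP => _.
  by rewrite -[_ *+ k.+1]mulr_natr; field; rewrite kf nat1r k0.
have -> : (p - m.+1 + k.+1 = p - m + k)%N by lia.
by rewrite -[_ *+ k.+1]mulr_natr; field; rewrite kf nat1r k0.
Qed.

Lemma taylor_m m : (m <= p)%N -> forall t, 0 <= t <= 1 -> h (p - m)%N t <= (Q m).[t].
Proof.
elim: m => [|m IH] mp t /andP[t0 t1].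
  rewrite /Q horner_poly !big_ord_recl big_ord0 /= /cc /=.
  have -> : bump 0 0 = 1%N by [].
  rewrite subn0 addn0 fact0 !divr1 expr0 mulr1 expr1 addr0.
  have := @Dn_lip R n f p Lp (x + t *: s) (x + 0 *: s) s p1 H1 H3.
  rewrite scale0r addr0.
  have -> : x + t *: s - x = t *: s by rewrite addrC addKr.
  rewrite enormZ ger0_norm // /h /hh scale0r addr0 => H.
  rewrite -lerBlDl (le_trans H) //.
  by rewrite /M exprS le_eqVlt; apply/orP; left; apply/eqP; ring.
have mp' : (m < p)%N by [].
pose psi := fun u => (Q m.+1).[u] - h (p - m.+1)%N u.
have hd : forall u, derivable (h (p - m.+1)%N) u 1 /\ derive1 (h (p - m.+1)%N) u = h (p - m)%N u.
  move=> u; have := @hh_der R n f p H1 x s (p - m.+1)%N _ u.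
  by rewrite subnSK //; apply; rewrite leq_subr.
have dpsi : forall u, derivable psi u 1.
  by move=> u; apply: derivableB; [exact: derivable_horner | case: (hd u)].
have : psi 0 <= psi t.
  apply: (@ger0_derive1_ndecr R psi 0 1) => //.
  - move=> u; rewrite in_itv /= => /andP[u0 u1].
    rewrite derive1E /psi deriveB //; last by case: (hd u).
    rewrite -!derive1E -derivE derivQ //; case: (hd u) => _ ->.
    by rewrite subr_ge0; apply: IH; [exact: ltnW | rewrite (ltW u0) (ltW u1)].
  - apply: derivable_within_continuous => u _; exact: dpsi.
rewrite /psi horner_coef0 coef_poly /= /cc /= addn0 fact0 divr1 subrr.
by rewrite subr_ge0.
Qed.

Lemma taylor_bound : f (x + s) <= Tfp f p x s + Lp / (p.+1)`!%:R * enorm s ^+ p.+1.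
Proof.
have := @taylor_m p (leqnn p) 1; rewrite ler01 lexx => /(_ isT).
rewrite subnn /h /hh /= scale1r => H; apply: (le_trans H).
rewrite /Q horner_poly big_ord_recr /= /cc eqxx expr1n mulr1.
rewrite (eq_bigr (fun k : 'I_p.+1 => Dn f k x (nseq k s) / (k`!)%:R)); last first.
  move=> k _; rewrite expr1n mulr1 ifN; last by rewrite neq_ltn ltn_ord.
  by rewrite subnn add0n /h /hh scale0r addr0.
rewrite -(big_mkord xpredT (fun k => Dn f k x (nseq k s) / (k`!)%:R)) /=.
rewrite big_ltn // /= fact0 divr1 /Tfp.
rewrite (eq_big_nat _ _ (F2 := fun i => (i`!%:R)^-1 * Dn f i x (nseq i s))); last first.
  by move=> i _; rewrite mulrC.
by rewrite /M mulrAC.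
Qed.
End Taylor2.


Lemma CS (R : realType) m (a b : 'I_m -> R) :
  `|\sum_i a i * b i| <= Num.sqrt (\sum_i a i ^+ 2) * Num.sqrt (\sum_i b i ^+ 2).
Proof.
set A := \sum_i a i ^+ 2; set B := \sum_i b i ^+ 2; set C := \sum_i a i * b i.
have A0 : 0 <= A by apply: sumr_ge0 => i _; exact: sqr_ge0.
have B0 : 0 <= B by apply: sumr_ge0 => i _; exact: sqr_ge0.
rewrite -sqrtrM // -sqrtr_sqr ler_sqrt ?mulr_ge0 //.
have key : forall t, 0 <= t ^+ 2 * A - 2 * t * C + B.
  move=> t.
  have -> : t ^+ 2 * A - 2 * t * C + B = \sum_i (a i * t - b i) ^+ 2.
    rewrite /A /B /C mulr_sumr mulr_sumr -sumrN -!big_split /=.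
    by apply: eq_bigr => i _; ring.
  by apply: sumr_ge0 => i _; exact: sqr_ge0.
have [Az|Ap] := eqVneq A 0.
  have az : forall i, a i = 0.
    move=> i; have := @psumr_eq0P _ _ xpredT (fun i => a i ^+ 2) (fun i _ => sqr_ge0 (a i)) Az i isT.
    by move/eqP; rewrite sqrf_eq0 => /eqP.
  have -> : C = 0 by rewrite /C big1 // => i _; rewrite az mul0r.
  by rewrite expr0n /= mulr_ge0.
have Ag : 0 < A by rewrite lt_neqAle eq_sym Ap.
have := key (C / A).
have -> : (C / A) ^+ 2 * A - 2 * (C / A) * C + B = B - C ^+ 2 / A.
  by field.
rewrite subr_ge0 ler_pdivrMr // => H.
by rewrite mulrC.
Qed.

Lemma grad_bound (R : realType) n (f : 'cV[R]_n -> R) p kg (y s : 'cV[R]_n) :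
  (1 <= p)%N -> AS1 f p -> AS4 f kg -> - (kg * enorm s) <= Dn f 1 y (nseq 1 s).
Proof.
move=> p1 [Hd _] [kg0 H4].
have df : differentiable f y by exact: (Hd 0%N [::]).
rewrite /= deriveE //.
have sE : s = \sum_(j < n) s j 0 *: (delta_mx j 0 : 'cV[R]_n).
  apply/matrixP => i k; rewrite ord1 summxE (bigD1 i) //= big1 ?addr0.
    by rewrite !mxE !eqxx mulr1.
  by move=> j ji; rewrite !mxE eq_sym (negbTE ji) mulr0.
have -> : 'd f y s = \sum_(j < n) s j 0 * grad f y j 0.
  rewrite {1}sE linear_sum; apply: eq_bigr => j _.
  by rewrite linearZ /= -deriveE // mxE.
rewrite lerNl; apply: le_trans (ler_norm _) _; rewrite normrN.
apply: le_trans (@CS R n (fun j => s j 0) (fun j => grad f y j 0)) _.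
rewrite mulrC; apply: ler_wpM2r; first exact: sqrtr_ge0.
exact: H4.
Qed.



Section Step.
Variable R : realType.

Lemma root_pow (c : R) d : 0 <= c -> (0 < d)%N -> (c `^ (d%:R^-1)) ^+ d = c.
Proof.
move=> c0 d0; rewrite -powR_mulrn ?powR_ge0 // -powRrM mulVf ?powRr1 //.
by rewrite pnatr_eq0 -lt0n.
Qed.

Lemma root_bound (c x : R) d : 0 <= c -> (0 < d)%N -> 0 <= x ->
  2 * c `^ (d%:R^-1) <= x -> c <= x ^+ d * (2^-1) ^+ d.
Proof.
move=> c0 d0 x0 H.
have := @lerXn2r R d _ _ (mulr_ge0 (ler0n R 2) (powR_ge0 _ _)) x0 H.
rewrite exprMn root_pow // => H'.
rewrite exprVn ler_pdivlMr ?exprn_gt0 // mulrC //.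
Qed.

Lemma geom p : (1 <= p)%N ->
  \sum_(2 <= i < p.+1) (2^-1 : R) ^+ (p.+1 - i) + (2^-1) ^+ p = 1 - (2^-1) ^+ p.
Proof.
elim: p => [//|p IH] p1.
have [->|p0] := eqVneq p 0%N.
  by rewrite big_geq //= add0r expr1; field.
have p0' : (0 < p)%N by rewrite lt0n.
have {}IH := IH p0'.
rewrite big_nat_recr //=.
have -> : \sum_(2 <= i < p.+1) (2^-1 : R) ^+ (p.+2 - i) =
          2^-1 * \sum_(2 <= i < p.+1) (2^-1 : R) ^+ (p.+1 - i).
  rewrite mulr_sumr big_nat_cond [RHS]big_nat_cond; apply: eq_bigr => i /andP[/andP[_ ip] _].
  by rewrite subSn ?exprS //; exact: ltnW.
have -> : (p.+2 - p.+1 = 1)%N by rewrite subSS subSn // subnn.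
have E : \sum_(2 <= i < p.+1) (2^-1 : R) ^+ (p.+1 - i) = 1 - 2 * (2^-1) ^+ p by move: IH; lra.
by rewrite E expr1 exprS; set w := _ ^+ p; field.
Qed.

Lemma sum_term_le (F : nat -> R) a b i :
  (forall j, (a <= j < b)%N -> 0 <= F j) -> (a <= i < b)%N ->
  F i <= \sum_(a <= j < b) F j.
Proof.
move=> H iab.
rewrite (bigD1_seq i) ?mem_index_iota ?iota_uniq //= lerDl big_seq_cond sumr_ge0 //.
by move=> j /andP[]; rewrite mem_index_iota => /H.
Qed.

Lemma step_bound p (a a0 kg kh r : R) :
  (1 <= p)%N -> 0 < a0 -> a0 <= a -> 0 <= kg -> 0 <= kh -> 0 <= r ->
  a * r ^+ p.+1 < kg * r + \sum_(2 <= i < p.+1) kh * r ^+ i / (i`!)%:R ->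
  r <= 2 * (\sum_(2 <= i < p.+1) (kh / ((i`!)%:R * a0)) `^ (((p - i + 1)%N)%:R^-1))
       + 2 * (kg / a0) `^ (p%:R^-1).
Proof.
move=> p1 a00 a0a kg0 kh0 r0 H.
set eta := \sum_(2 <= i < p.+1) _.
have eta0 : 0 <= eta by apply: sumr_ge0 => i _; exact: powR_ge0.
have c10 : 0 <= (kg / a0) `^ (p%:R^-1) by exact: powR_ge0.
rewrite leNgt; apply/negP => rB.
have w0 : 0 <= (2^-1 : R) by [].
have ar0 : 0 <= a * r ^+ p.+1 by rewrite mulr_ge0 ?exprn_ge0 // ltW // (lt_le_trans a00).
have Hg : kg * r <= a * r ^+ p.+1 * (2^-1) ^+ p.
  have : kg / a0 <= r ^+ p * (2^-1) ^+ p.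
    apply: root_bound => //; first by rewrite divr_ge0 // ltW.
    by apply: ltW; apply: le_lt_trans rB; rewrite lerDr mulr_ge0.
  rewrite ler_pdivrMr // => Hk.
  rewrite exprSr [a * _]mulrC -!mulrA [r * _]mulrC !mulrA ler_wpM2r //.
  apply: le_trans Hk _; rewrite [X in _ <= X]mulrAC ler_wpM2l // mulr_ge0 // exprn_ge0 //.
have Hh : forall i, (2 <= i < p.+1)%N ->
    kh * r ^+ i / (i`!)%:R <= a * r ^+ p.+1 * (2^-1) ^+ (p.+1 - i).
  move=> i /andP[i2 ip].
  have f0 : 0 < (i`!)%:R :> R by rewrite ltr0n fact_gt0.
  have : kh / ((i`!)%:R * a0) <= r ^+ (p - i + 1) * (2^-1) ^+ (p - i + 1).
    apply: root_bound => //; first by rewrite divr_ge0 // mulr_ge0 // ltW.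
      by lia.
    apply: ltW; apply: le_lt_trans rB; apply: (@le_trans _ _ (2 * eta)); last by rewrite lerDl mulr_ge0.
    rewrite ler_pM2l //; apply: (@sum_term_le (fun i => (kh / ((i`!)%:R * a0)) `^ (((p - i + 1)%N)%:R^-1))).
      by move=> j _; exact: powR_ge0.
    by rewrite i2.
  have -> : (p - i + 1 = p.+1 - i)%N by lia.
  rewrite ler_pdivrMr ?mulr_gt0 // => Hk.
  rewrite ler_pdivrMr //.
  have -> : r ^+ p.+1 = r ^+ (p.+1 - i) * r ^+ i by rewrite -exprD subnK // ltnW.
  apply: le_trans (_ : r ^+ (p.+1 - i) * (2^-1) ^+ (p.+1 - i) * ((i`!)%:R * a0) * r ^+ i <= _).
    by rewrite ler_wpM2r ?exprn_ge0.
  set A := r ^+ (p.+1 - i); set W := (2^-1 : R) ^+ (p.+1 - i); set Ri := r ^+ i.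
  set F := (i`!)%:R.
  have A0 : 0 <= A by rewrite exprn_ge0.
  have W0 : 0 <= W by rewrite exprn_ge0.
  have Ri0 : 0 <= Ri by rewrite exprn_ge0.
  have -> : A * W * (F * a0) * Ri = (A * W * F * Ri) * a0 by ring.
  have -> : a * (A * Ri) * W * F = (A * W * F * Ri) * a by ring.
  by rewrite ler_wpM2l // !mulr_ge0 // ltW.
have : kg * r + \sum_(2 <= i < p.+1) kh * r ^+ i / (i`!)%:R <= a * r ^+ p.+1.
  apply: le_trans (_ : a * r ^+ p.+1 * (2^-1) ^+ p +
     \sum_(2 <= i < p.+1) a * r ^+ p.+1 * (2^-1) ^+ (p.+1 - i) <= _).
    apply: lerD; first exact: Hg.
    rewrite big_nat_cond [X in _ <= X]big_nat_cond.
    by apply: ler_sum => i /andP[ii _]; exact: Hh.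
  rewrite -mulr_sumr addrC -mulrDr geom //.
  by rewrite ler_piMr // lerBlDr lerDl exprn_ge0.
by rewrite leNgt H.
Qed.
End Step.


Lemma Tfp0 (R : realType) n (f : 'cV[R]_n -> R) p y :
  AS1 f p -> Tfp f p y 0 = f y.
Proof.
move=> H1; rewrite /Tfp big_nat_cond big1 ?addr0 // => i /andP[/andP[i1 ip] _].
rewrite -(scale0r (0 : 'cV[R]_n)) (@Dn_hom R n f p H1) // expr0n.
by rewrite -[(i == 0)%N]negbK -lt0n i1 mul0r mulr0.
Qed.

Lemma Dn_low (R : realType) n (f : 'cV[R]_n -> R) p kh i y (s : 'cV[R]_n) :
  AS1 f p -> AS5 f p kh -> (2 <= i <= p)%N ->
  - (kh * enorm s ^+ i) <= Dn f i y (nseq i s).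
Proof.
move=> H1 [kh0 H5] /andP[i2 ip].
have [->|s0] := eqVneq s 0.
  rewrite -(scale0r (0 : 'cV[R]_n)) (@Dn_hom R n f p H1) // expr0n enormZ normr0 mul0r expr0n.
  have -> : (i == 0)%N = false by case: i i2 {ip}.
  by rewrite mul0r mulr0 oppr0.
have r0 : 0 < enorm s.
  by rewrite lt_neqAle enorm_ge0 andbT eq_sym; apply/eqP => /enorm_eq0; apply/eqP.
set u := (enorm s)^-1 *: s.
have su : s = enorm s *: u by rewrite /u scalerA divff ?gt_eqF // scale1r.
have nu : enorm u = 1.
  by rewrite /u enormZ ger0_norm ?invr_ge0 ?enorm_ge0 // mulVf // gt_eqF.
clearbody u.
have -> : nseq i s = nseq i (enorm s *: u) by rewrite -su.
rewrite (@Dn_hom R n f p H1) // mulrC -mulrN ler_wpM2l ?exprn_ge0 ?enorm_ge0 //.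
by apply: H5; rewrite ?i2 ?ip ?nu.
Qed.


Theorem mainTheorem5 (R : realType) (n l p : nat) (f : 'cV[R]_n -> R)
  (Lp kg khigh : R)
  (nu0 eps theta mum1 vth : R)
  (x : nat -> 'cV[R]_n) (S : nat -> 'M[R]_(l, n)) (sh : nat -> 'cV[R]_l)
  (sigma nu kS : nat -> R) (k1 : nat) :
  (1 <= p)%N -> (l < n)%N ->
  AS1 f p -> AS3 f p Lp -> AS4 f kg -> AS5 f p khigh ->
  0 < nu0 -> 0 < eps <= 1 -> 1 < theta -> 0 <= mum1 -> 0 < vth < 1 ->
  skoffar_realization f p nu0 theta mum1 vth x S sh sigma nu kS ->
  (* K_1 occurs: k1 = inf {k >= 1 : nu_k >= 2 Lp / vth} is finite *)
  (1 <= k1)%N -> 2 * Lp / vth <= nu k1 ->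
  (forall k, (1 <= k < k1)%N -> nu k < 2 * Lp / vth) ->
  f (x k1) <= f_max f (x 0%N) p Lp kg khigh vth nu0.
Proof.
move=> p1 _ H1 H3 H4 H5 nu00 _ _ _ /andP[vth0 vth1]
  [nu0E [sig0 [sigb [_ [mdec [_ [xE nuE]]]]]]] k1p _ nuk1.
set s := fun k => (S k)^T *m sh k.
set r := fun k => enorm (s k).
have r0 : forall k, 0 <= r k by move=> k; exact: enorm_ge0.
have Lp0 : 0 <= Lp by case: H3.
have kg0 : 0 <= kg by case: H4.
have kh0 : 0 <= khigh by case: H5.
set F := ((p.+1)`!)%:R : R.
have F0 : 0 < F by rewrite ltr0n fact_gt0.
have nuge : forall k, nu0 <= nu k.
  elim=> [|k IH]; first by rewrite nu0E.
  rewrite nuE (le_trans IH) // lerDl mulr_ge0 ?exprn_ge0 ?enorm_ge0 //.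
  exact: le_trans (ltW nu00) IH.
have sigge : forall k, vth * nu k <= sigma k.
  move=> [|j]; first by rewrite sig0 nu0E ler_piMl // ltW.
  by case/andP: (sigb j.+1 isT).
have sig0' : forall k, 0 <= sigma k.
  move=> k; apply: le_trans (sigge k); rewrite mulr_ge0 // ltW //.
  exact: lt_le_trans nu00 (nuge k).
have decr : forall k, Tfp f p (x k) (s k) + sigma k / F * r k ^+ p.+1 < f (x k).
  move=> k; have := mdec k.
  by rewrite /mhat /That mulmx0 (@Tfp0 R n f p _ H1) enorm0 expr0n /= mulr0 addr0.
have step : forall k, f (x k.+1) <= f (x k) + (Lp - sigma k) / F * r k ^+ p.+1.
  move=> k; rewrite xE.
  have := @taylor_bound R n f p Lp p1 H1 H3 (x k) (s k).
  have := decr k.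
  rewrite -/(r k) !mulrBl; lra.
have nupos : forall k, 0 < nu k by move=> k; exact: lt_le_trans nu00 (nuge k).
have F4 : forall K, f (x K) <= f (x 0%N) + Lp / nu0 * (nu K - nu0) / F.
  elim=> [|K IH]; first by rewrite nu0E subrr mulr0 mul0r addr0.
  apply: le_trans (step K) _.
  set A := r K ^+ p.+1.
  have A0 : 0 <= A by rewrite exprn_ge0.
  have E : (Lp - sigma K) / F * A <= Lp / nu0 * (nu K * A) / F.
    have q1 : 1 <= nu K / nu0 by rewrite ler_pdivlMr // mul1r; exact: nuge.
    have E1 : (Lp - sigma K) * A <= Lp * (nu K / nu0) * A.
      apply: ler_wpM2r => //; apply: le_trans (_ : Lp <= _).
        by rewrite lerBlDr lerDl.
      by rewrite ler_peMr.
    have -> : (Lp - sigma K) / F * A = (Lp - sigma K) * A / F by ring.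
    have -> : Lp / nu0 * (nu K * A) / F = Lp * (nu K / nu0) * A / F by ring.
    by rewrite ler_pM2r // invr_gt0.
  have -> : Lp / nu0 * (nu K.+1 - nu0) / F = Lp / nu0 * (nu K - nu0) / F + Lp / nu0 * (nu K * A) / F.
    by rewrite nuE /A /r /s; ring.
  by rewrite addrA; apply: lerD.
set B := 2 * eta_const p khigh vth nu0 + 2 * (F * kg / (vth * nu0)) `^ (p%:R^-1).
have sb : forall k, r k <= B.
  move=> k; set a0 := vth * nu0 / F.
  have a00 : 0 < a0 by rewrite divr_gt0 // mulr_gt0.
  have a0a : a0 <= sigma k / F.
    rewrite ler_pM2r ?invr_gt0 //; apply: le_trans (sigge k).
    by rewrite ler_pM2l.
  have Hineq : sigma k / F * r k ^+ p.+1 <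
      kg * r k + \sum_(2 <= i < p.+1) khigh * r k ^+ i / (i`!)%:R.
    have d := decr k; rewrite /Tfp big_ltn // in d.
    have g := @grad_bound R n f p kg (x k) (s k) p1 H1 H4.
    have hs : \sum_(2 <= i < p.+1) - (khigh * r k ^+ i / (i`!)%:R) <=
        \sum_(2 <= i < p.+1) ((i`!)%:R)^-1 * Dn f i (x k) (nseq i (s k)).
      rewrite big_nat_cond [X in _ <= X]big_nat_cond; apply: ler_sum => i /andP[/andP[i2 ip] _].
      rewrite mulrC -mulNr mulNr -mulrN ler_wpM2l ?invr_ge0 ?ler0n //.
      by apply: (@Dn_low R n f p khigh i (x k) (s k) H1 H5); rewrite i2 -ltnS.
    rewrite sumrN in hs.
    move: d g hs; rewrite /= invr1 mul1r -/(r k); lra.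
  have := @step_bound R p _ _ _ _ _ p1 a00 a0a kg0 kh0 (r0 k) Hineq.
  suff -> : 2 * \sum_(2 <= i < p.+1) (khigh / ((i`!)%:R * a0)) `^ (((p - i + 1)%N)%:R^-1) +
     2 * (kg / a0) `^ (p%:R^-1) = B by [].
  rewrite /B /eta_const; congr (2 * _ + 2 * _).
    apply: eq_bigr => i _; congr (_ `^ _).
    have : (i`!)%:R != 0 :> R by rewrite pnatr_eq0 -lt0n fact_gt0.
    by rewrite /a0; move=> ?; field; rewrite ?gt_eqF.
  by congr (_ `^ _); rewrite /a0; field; rewrite ?gt_eqF.
have eta0 : 0 <= eta_const p khigh vth nu0.
  by apply: sumr_ge0 => i _; exact: powR_ge0.
have B0 : 0 <= B by rewrite addr_ge0 ?mulr_ge0 ?powR_ge0.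
set NM := nu_max p Lp kg khigh vth nu0.
have NME : NM = 2 * Lp / vth * (1 + B ^+ p.+1) by [].
have c0 : 0 <= 2 * Lp / vth by rewrite divr_ge0 ?mulr_ge0 // ltW.
have NMge : 2 * Lp / vth <= NM.
  by rewrite NME ler_peMr // lerDl exprn_ge0.
have fin : forall Y, Y <= NM -> f (x 0%N) + Lp / nu0 * Y / F <=
    f_max f (x 0%N) p Lp kg khigh vth nu0.
  move=> Y YN; rewrite /f_max /= -/F -/NM lerD2l.
  have -> : Lp / nu0 * Y / F = F^-1 * (Lp / nu0 * Y) by ring.
  rewrite ler_pM2l ?invr_gt0 //; apply: le_trans (_ : Lp / nu0 * NM <= _).
    by rewrite ler_wpM2l // divr_ge0 // ltW.
  by rewrite lerDl mulr_ge0 // ltW.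
case: k1 k1p nuk1 => [//|K] _ nuk1.
have [sL|sL] := leP Lp (sigma K).
  apply: le_trans (step K) _.
  have : (Lp - sigma K) / F * r K ^+ p.+1 <= 0.
    by rewrite mulr_le0_ge0 ?exprn_ge0 // mulr_le0_ge0 ?subr_le0 // invr_ge0 ltW.
  move=> H0; apply: le_trans (_ : f (x K) <= _).
    by rewrite -[X in _ <= X]addr0 lerD2l.
  apply: le_trans (F4 K) _; apply: fin.
  case: K nuk1 {sL H0} => [|K] nuk1; first by rewrite nu0E subrr (le_trans c0).
  have h : nu K.+1 < 2 * Lp / vth by apply: nuk1; rewrite ltnSn.
  apply: le_trans NMge; apply: le_trans (ltW h).
  by rewrite lerBlDr lerDl ltW.
apply: le_trans (F4 K.+1) _; apply: fin.
have nuK : nu K <= 2 * Lp / vth.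
  case: K nuk1 sL => [|K] nuk1 sL; last by apply: ltW; apply: nuk1; rewrite ltnSn.
  rewrite nu0E -sig0; apply: le_trans (ltW sL) _.
  rewrite ler_pdivlMr // mulrC ler_wpM2r //; lra.
rewrite nuE NME.
apply: le_trans (_ : nu K + nu K * r K ^+ p.+1 <= _).
  by rewrite lerBlDr lerDl ltW.
rewrite -[X in X + _]mulr1 -mulrDr; apply: ler_pM => //.
- exact: (ltW (nupos K)).
- by rewrite addr_ge0 ?exprn_ge0.
rewrite lerD2l; apply: lerXn2r => //; rewrite nnegrE //.
Qed.
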